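(* Let $d\ge1$, $u\in\mathbb{C}\setminus\{0\}$, let $z,x_1,\ldots,x_{d-1}\in\mathbb{C}$ be the parameters of the Markov trace $\mathrm{tr}$, and $x_0=1$. For all $0\le m\le d-1$, $$\mathrm{tr}\big(e_1^{(m)}e_2\,g_{1,2}\big)=(u+1)z^2x_m+(u+2)z\,E^{(m)}+\mathrm{tr}\big(e_1^{(m)}e_2\big).$$
   Context: The Yokonuma–Hecke algebra $\mathrm{Y}_{d,n}(u)$ is the unital associative $\mathbb{C}$-algebra with generators $g_1,\ldots,g_{n-1},t_1,\ldots,t_n$ and relations: $g_ig_j=g_jg_i$ for $|i-j|>1$; $g_{i+1}g_ig_{i+1}=g_ig_{i+1}g_i$; $t_it_j=t_jt_i$; $t_i^d=1$; $g_it_i=t_{i+1}g_i$; $g_it_{i+1}=t_ig_i$; $g_it_j=t_jg_i$ for $j\ne i,i+1$; $g_i^2=1+(u-1)e_i+(u-1)e_ig_i$, where $e_i=\frac1d\sum_{s=0}^{d-1}t_i^st_{i+1}^{d-s}$; $\mathrm{Y}_{d,n}(u)\subset\mathrm{Y}_{d,n+1}(u)$ naturally. Also $e_i^{(m)}=\frac1d\sum_{s=0}^{d-1}t_i^{m+s}t_{i+1}^{d-s}$. For $w\in S_n$ with reduced expression $s_{i_1}\cdots s_{i_k}$ put $g_w=g_{i_1}\cdots g_{i_k}$, and $g_{1,2}=\sum_{w\in S_3}g_w\in\mathrm{Y}_{d,3}(u)$. For complex $z,x_1,\ldots,x_{d-1}$, $\mathrm{tr}$ is the unique linear map on $\bigcup_n\mathrm{Y}_{d,n}(u)$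 with $\mathrm{tr}(ab)=\mathrm{tr}(ba)$, $\mathrm{tr}(1)=1$, $\mathrm{tr}(ag_n)=z\,\mathrm{tr}(a)$, $\mathrm{tr}(at_{n+1}^s)=x_s\,\mathrm{tr}(a)$ for $a,b\in\mathrm{Y}_{d,n}(u)$. Indices of $x$ are taken mod $d$ and $E^{(m)}=\frac1d\sum_{s=0}^{d-1}x_{m+s}x_{d-s}$. *)

(* Defs.v *)
From mathcomp Require Import Rstruct.
From HB Require Import structures.
From mathcomp Require Import all_boot all_order all_algebra.
From mathcomp Require Import complex.
Set Implicit Arguments. Unset Strict Implicit. Unset Printing Implicit Defensive.
Import Order.TTheory GRing.Theory Num.Theory.
Local Open Scope ring_scope.

Notation CC := (complex Rdefinitions.R).

Section YH.
Variable A : algType CC.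
Variables (d : nat) (u : CC).
(* generators: g i (1 <= i <= n-1) and t i (1 <= i <= n); other indices unused *)
Variables (g t : nat -> A).

Definition yh_e (i : nat) : A :=
  (d%:R)^-1 *: \sum_(s < d) (t i ^+ s * t i.+1 ^+ (d - s)).

Definition yh_em (m i : nat) : A :=
  (d%:R)^-1 *: \sum_(s < d) (t i ^+ (m + s) * t i.+1 ^+ (d - s)).

Definition YH_rels (n : nat) : Prop :=
  (forall i j, (1 <= i <= n.-1)%N -> (1 <= j <= n.-1)%N -> (i.+1 < j \/ j.+1 < i)%N ->
         g i * g j = g j * g i) /\
      (forall i, (1 <= i)%N -> (i.+1 <= n.-1)%N ->
         g i.+1 * g i * g i.+1 = g i * g i.+1 * g i) /\
      (forall i j, (1 <= i <= n)%N -> (1 <= j <= n)%N -> t i * t j = t j * t i) /\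
      (forall i, (1 <= i <= n)%N -> t i ^+ d = 1) /\
      (forall i, (1 <= i <= n.-1)%N ->
         [/\ g i * t i = t i.+1 * g i,
             g i * t i.+1 = t i * g i &
             forall j, (1 <= j <= n)%N -> (j != i)%N -> (j != i.+1)%N -> g i * t j = t j * g i]) /\
      (forall i, (1 <= i <= n.-1)%N ->
         g i ^+ 2 = 1 + (u - 1) *: yh_e i + (u - 1) *: (yh_e i * g i)).

(* g_{1,2} = sum_{w in S_3} g_w ; the reduced words of S_3 are
   1, s1, s2, s1 s2, s2 s1, s1 s2 s1. *)
Definition yh_g12 : A :=
  1 + g 1 + g 2 + g 1 * g 2 + g 2 * g 1 + g 1 * g 2 * g 1.

(* The subalgebra Y_{d,k} of A generated by g_1..g_{k-1}, t_1..t_k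
   (for k = 0 this is C.1). *)
Inductive yh_sub (k : nat) : A -> Prop :=
  | yh_sub1 : yh_sub k 1
  | yh_subg i : (1 <= i < k)%N -> yh_sub k (g i)
  | yh_subt i : (1 <= i <= k)%N -> yh_sub k (t i)
  | yh_subD a b : yh_sub k a -> yh_sub k b -> yh_sub k (a + b)
  | yh_subZ (c : CC) a : yh_sub k a -> yh_sub k (c *: a)
  | yh_subM a b : yh_sub k a -> yh_sub k b -> yh_sub k (a * b).

End YH.

(* (A, g, t) is the algebra Y_{d,n}(u) presented by the generators and
   relations above: the relations hold, and it is universal among
   C-algebras with elements satisfying them. *)
Definition is_YH (A : algType CC) (d : nat) (u : CC) (n : nat) (g t : nat -> A) :
  Prop :=
  YH_rels d u g t n /\
  forall (B : algType CC) (gB tB : nat -> B), YH_rels d u gB tB n ->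
    (exists f : {lrmorphism A -> B},
        (forall i, (1 <= i < n)%N -> f (g i) = gB i) /\
        (forall i, (1 <= i <= n)%N -> f (t i) = tB i)) /\
    (forall f1 f2 : {lrmorphism A -> B},
        (forall i, (1 <= i < n)%N -> f1 (g i) = gB i) ->
        (forall i, (1 <= i <= n)%N -> f1 (t i) = tB i) ->
        (forall i, (1 <= i < n)%N -> f2 (g i) = gB i) ->
        (forall i, (1 <= i <= n)%N -> f2 (t i) = tB i) ->
        f1 =1 f2).

(* x_s with indices mod d, x_0 = 1; xs provides x_1, ..., x_{d-1}. *)
Definition xmod (d : nat) (xs : nat -> CC) (s : nat) : CC :=
  if (s %% d == 0)%N then 1 else xs (s %% d)%N.

Definition EE (d : nat) (xs : nat -> CC) (m : nat) : CC :=
  (d%:R)^-1 * \sum_(s < d) (xmod d xs (m + s) * xmod d xs (d - s)).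

(* tr, restricted to Y_{d,n} = A, satisfies the defining properties of the
   Markov trace with parameters z, x_1..x_{d-1} (all instances of the
   properties that live inside Y_{d,n}). *)
Definition is_markov_trace (A : algType CC) (d n : nat) (g t : nat -> A)
   (z : CC) (xs : nat -> CC) (tr : {linear A -> CC^o}) : Prop :=
  [/\ (forall a b : A, tr (a * b) = tr (b * a)),
      tr 1 = 1,
      (forall k a, (1 <= k < n)%N -> yh_sub g t k a -> tr (a * g k) = z * tr a) &
      (forall k a s, (k < n)%N -> yh_sub g t k a ->
          tr (a * t k.+1 ^+ s) = xmod d xs s * tr a)].

(* Main.v *)
Require Import Defs.
From mathcomp Require Import Rstruct.
From HB Require Import structures.
From mathcomp Require Import all_boot all_order all_algebra.
From mathcomp Require Import complex.
From mathcomp Require Import zify ring.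
Import Order.TTheory GRing.Theory Num.Theory.
Local Open Scope ring_scope.

Section Sums.
Variables (d : nat) (xs : nat -> CC).
Hypothesis Hd : (0 < d)%N.
Local Notation x := (xmod d xs).

Lemma xmodD n : x (n + d) = x n.
Proof. by rewrite /xmod modnDr. Qed.

Lemma xmodE n n' : n = (n' + d)%N -> x n = x n'.
Proof. by move=> ->; rewrite xmodD. Qed.

Lemma shiftK a b :
  \sum_(j < d) x (a + (d - j)) * x (b + j) =
  \sum_(j < d) x (d - j) * x ((a + b) + j).
Proof.
elim: a b => [|a IH] b; first by apply: eq_bigr => j _; rewrite !add0n.
rewrite addSnnS -IH.
case: d Hd => // d' _.
rewrite big_ord_recl [in RHS]big_ord_recr /=.

rewrite addrC; congr (_ + _); last first.
  apply: eq_bigr => i _; rewrite /bump /=.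
  have := ltn_ord i; move=> hi; congr (_ * _); congr (xmod _ _ _); lia.
have xE : forall n n', n = (n' + d'.+1)%N -> xmod d'.+1 xs n = xmod d'.+1 xs n'.
  by move=> ? ? ->; rewrite /xmod modnDr.
rewrite (xE (a.+1 + (d'.+1 - 0))%N a.+1); last lia.
rewrite (xE (b.+1 + d')%N b); last lia.
by rewrite addn0 subSnn addn1.
Qed.
End Sums.
Section Gen.
Variable R : pzRingType.
Lemma powL (a b c : R) n : a * b = c * a -> a * b ^+ n = c ^+ n * a.
Proof.
move=> h; elim: n => [|n IH]; first by rewrite !expr0 mulr1 mul1r.
by rewrite exprS mulrA h -mulrA IH mulrA -exprS.
Qed.
Lemma powR (a b c : R) n : b * a = a * c -> b ^+ n * a = a * c ^+ n.
Proof.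
move=> h; elim: n => [|n IH]; first by rewrite !expr0 mulr1 mul1r.
by rewrite exprSr -mulrA h mulrA IH -mulrA -exprSr.
Qed.
Lemma powRw (a b c w : R) n : b * a = a * c -> b ^+ n * (a * w) = a * (c ^+ n * w).
Proof. by move=> h; rewrite mulrA (powR a b c n h) -mulrA. Qed.
Lemma powLw (a b c w : R) n : a * b = c * a -> a * (b ^+ n * w) = c ^+ n * (a * w).
Proof. by move=> h; rewrite mulrA (powL a b c n h) -mulrA. Qed.
Lemma exprDw (a w : R) m n : a ^+ m * (a ^+ n * w) = a ^+ (m + n) * w.
Proof. by rewrite mulrA -exprD. Qed.
End Gen.

Section Alg.
Variables (A : algType CC) (d : nat) (u : CC) (g t : nat -> A) (z : CC)
  (xs : nat -> CC) (tr : {linear A -> CC^o}).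
Hypothesis Hd : (0 < d)%N.
Hypothesis tC : forall i j, (1 <= i <= 3)%N -> (1 <= j <= 3)%N -> t i * t j = t j * t i.
Hypotheses (g1t1 : g 1 * t 1 = t 2 * g 1) (g1t2 : g 1 * t 2 = t 1 * g 1)
  (g1t3 : g 1 * t 3 = t 3 * g 1) (g2t2 : g 2 * t 2 = t 3 * g 2)
  (g2t3 : g 2 * t 3 = t 2 * g 2) (g2t1 : g 2 * t 1 = t 1 * g 2).
Hypothesis braid : g 2 * g 1 * g 2 = g 1 * g 2 * g 1.
Hypothesis quad : g 2 ^+ 2 = 1 + (u - 1) *: yh_e d t 2 + (u - 1) *: (yh_e d t 2 * g 2).
Hypothesis trC : forall a b : A, tr (a * b) = tr (b * a).
Hypothesis tr1 : tr 1 = 1.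
Hypothesis trg : forall k a, (1 <= k < 3)%N -> yh_sub g t k a -> tr (a * g k) = z * tr a.
Hypothesis trt : forall k a s, (k < 3)%N -> yh_sub g t k a ->
          tr (a * t k.+1 ^+ s) = xmod d xs s * tr a.
Local Notation x := (xmod d xs).

Lemma tXC i j p q : (1 <= i <= 3)%N -> (1 <= j <= 3)%N ->
  t i ^+ p * t j ^+ q = t j ^+ q * t i ^+ p.
Proof.
move=> hi hj; apply: commrX; apply: commr_sym; apply: commrX.
exact: tC.
Qed.

Lemma subX k i n : (1 <= i <= k)%N -> yh_sub g t k (t i ^+ n).
Proof.
move=> hi; elim: n => [|n IH]; first by rewrite expr0; exact: yh_sub1.
by rewrite exprS; apply: yh_subM => //; exact: yh_subt.
Qed.

Lemma tr_t1 p : tr (t 1 ^+ p) = x p.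
Proof.
rewrite -[t 1 ^+ p]mul1r (trt 0 1 p) //; first by rewrite tr1 mulr1.
exact: yh_sub1.
Qed.

Lemma tr_t12 p q : tr (t 1 ^+ p * t 2 ^+ q) = x q * x p.
Proof. by rewrite (trt 1) // ?tr_t1 //; exact: subX. Qed.

Lemma N0 p q : tr (t 1 ^+ p * t 2 ^+ q * g 1) = z * x (q + p).
Proof.
rewrite -mulrA (@powR _ (g 1) (t 2) (t 1) q); last by rewrite g1t1.
rewrite mulrA trC mulrA -exprD (trg 1) ?tr_t1 //.
exact: subX.
Qed.

Lemma tXCw i j p q w : (1 <= i <= 3)%N -> (1 <= j <= 3)%N ->
  t i ^+ p * (t j ^+ q * w) = t j ^+ q * (t i ^+ p * w).
Proof. by move=> hi hj; rewrite mulrA (tXC i j p q hi hj) -mulrA. Qed.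

Lemma sub12 p q : yh_sub g t 2 (t 1 ^+ p * t 2 ^+ q).
Proof. by apply: yh_subM; apply: subX. Qed.

Lemma sub12g p q : yh_sub g t 2 (t 1 ^+ p * t 2 ^+ q * g 1).
Proof. by apply: yh_subM; [apply: sub12 | apply: yh_subg]. Qed.

Definition M p q r w := t 1 ^+ p * (t 2 ^+ q * (t 3 ^+ r * w)).

Lemma L1 p q r : tr (M p q r (g 1)) = z * x (q + p) * x r.
Proof.
rewrite /M (@powR _ (g 1) (t 3) (t 3)); last by rewrite g1t3.
rewrite !mulrA (trt 2) //; last exact: sub12g.
by rewrite N0 mulrC.
Qed.

Lemma L2 p q r : tr (M p q r (g 2)) = z * x (r + q) * x p.
Proof.
rewrite /M (@powR _ (g 2) (t 3) (t 2) r); last by rewrite g2t2.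
rewrite !mulrA trC !mulrA (tXC 2 1 r p) // -(mulrA (t 1 ^+ p)) -exprD.
by rewrite (trg 2) // ?tr_t12 ?mulrA //; exact: sub12.
Qed.

Lemma L3 p q r : tr (M p q r (g 1 * g 2)) = z * (z * x (r + q + p)).
Proof.
rewrite /M (@powRw _ (g 1) (t 3) (t 3)); last by rewrite g1t3.
rewrite (@powR _ (g 2) (t 3) (t 2) r); last by rewrite g2t2.
rewrite !mulrA trC !mulrA (tXC 2 1 r p) // -(mulrA (t 1 ^+ p)) -exprD.
by rewrite (trg 2) // ?N0 ?mulrA //; exact: sub12g.
Qed.

Lemma L4 p q r : tr (M p q r (g 2 * g 1)) = z * (z * x (r + p + q)).
Proof.
rewrite /M !mulrA trC -!mulrA.
rewrite (@powLw _ (g 1) (t 1) (t 2)) // (@powLw _ (g 1) (t 2) (t 1)) //.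
rewrite (@powLw _ (g 1) (t 3) (t 3)) // (tXCw 2 1 p q) //.
exact: L3.
Qed.

Lemma Me p r q w : M p r q (yh_e d t 2 * w) =
  (d%:R)^-1 *: \sum_(j < d) M p (r + j) (q + (d - j)) w.
Proof.
rewrite /M /yh_e -scalerAl -!scalerAr; congr (_ *: _).
rewrite mulr_suml !mulr_sumr; apply: eq_bigr => j _.
by rewrite -mulrA (tXCw 3 2) // !exprDw.
Qed.

Lemma L5 p q r : tr (M p q r (g 1 * (g 2 * g 1))) =
  z * x (r + p) * x q
  + (u - 1) * ((d%:R)^-1 * \sum_(j < d) (z * x (r + j + p) * x (q + (d - j))))
  + (u - 1) * ((d%:R)^-1 * \sum_(j < d) (z * (z * x (q + (d - j) + p + (r + j))))).
Proof.
have bg : g 1 * (g 2 * g 1) = g 2 * (g 1 * g 2) by rewrite !mulrA braid.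
rewrite bg /M !mulrA trC -!mulrA.
rewrite (@powLw _ (g 2) (t 1) (t 1)) // (@powLw _ (g 2) (t 2) (t 3)) //.
rewrite (@powLw _ (g 2) (t 3) (t 2)) // (tXCw 3 2 q r) //.
rewrite (mulrA (g 2) (g 2)) -expr2 quad.
have := Me p r q; move: (yh_e d t 2) => e Me'.
rewrite !mulrDl mul1r -!scalerAl -mulrA.
rewrite !mulrDr -!scalerAr !linearD !scalarZ.
rewrite -/(M p r q (g 1)) -/(M p r q (e * g 1)) -/(M p r q (e * (g 2 * g 1))).
rewrite !Me' !scalarZ !linear_sum L1.
rewrite (eq_bigr _ (fun (i : 'I_d) _ => L1 p (r + i) (q + (d - i)))).
rewrite (eq_bigr _ (fun (i : 'I_d) _ => L4 p (r + i) (q + (d - i)))).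
ring.
Qed.


Lemma aX m X : tr (yh_em d t m 1 * yh_e d t 2 * X) =
  (d%:R)^-1 * ((d%:R)^-1 * \sum_(s < d) \sum_(r < d) tr (M (m + s) ((d - s) + r) (d - r) X)).
Proof.
rewrite /yh_em /yh_e -mulrA -!scalerAl -scalerAr !scalarZ; congr (_ * (_ * _)).
rewrite mulr_suml linear_sum; apply: eq_bigr => s _.
rewrite mulr_suml mulr_sumr linear_sum; apply: eq_bigr => r _.
by rewrite /M -!mulrA exprDw.
Qed.

Definition Ed m := \sum_(j < d) x (d - j) * x (m + j).

Lemma S1 m : \sum_(s < d) \sum_(r < d) tr (M (m + s) ((d - s) + r) (d - r) (g 1))
  = d%:R * (z * Ed m).
Proof.
rewrite (eq_bigr (fun _ => z * Ed m)); first by rewrite sumr_const card_ord mulr_natl.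
move=> s _; rewrite /Ed mulr_sumr; apply: eq_bigr => r _.
have := ltn_ord s; have := ltn_ord r => hr hs.
rewrite L1 (xmodE d xs _ (m + r)); [ring | lia].
Qed.

Lemma S2 m : \sum_(s < d) \sum_(r < d) tr (M (m + s) ((d - s) + r) (d - r) (g 2))
  = d%:R * (z * Ed m).
Proof.
rewrite (eq_bigr (fun s : 'I_d => d%:R * (z * (x (d - s) * x (m + s))))); last first.
  move=> s _; rewrite (eq_bigr (fun _ => z * (x (d - s) * x (m + s)))).
    by rewrite sumr_const card_ord mulr_natl.
  move=> r _; have := ltn_ord s; have := ltn_ord r => hr hs.
  rewrite L2 (xmodE d xs _ (d - s)); [ring | lia].
by rewrite -mulr_sumr -mulr_sumr.
Qed.

Lemma S3 m : \sum_(s < d) \sum_(r < d) tr (M (m + s) ((d - s) + r) (d - r) (g 1 * g 2))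
  = d%:R * (d%:R * (z * (z * x m))).
Proof.
rewrite (eq_bigr (fun _ => d%:R * (z * (z * x m)))); last first.
  move=> s _; rewrite (eq_bigr (fun _ => z * (z * x m))).
    by rewrite sumr_const card_ord mulr_natl.
  move=> r _; have := ltn_ord s; have := ltn_ord r => hr hs.
  rewrite L3 (xmodE d xs _ (m + d)); [by rewrite xmodD | lia].
by rewrite sumr_const card_ord [RHS]mulr_natl.
Qed.

Lemma S4 m : \sum_(s < d) \sum_(r < d) tr (M (m + s) ((d - s) + r) (d - r) (g 2 * g 1))
  = d%:R * (d%:R * (z * (z * x m))).
Proof.
rewrite (eq_bigr (fun _ => d%:R * (z * (z * x m)))); last first.
  move=> s _; rewrite (eq_bigr (fun _ => z * (z * x m))).
    by rewrite sumr_const card_ord mulr_natl.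
  move=> r _; have := ltn_ord s; have := ltn_ord r => hr hs.
  rewrite L4 (xmodE d xs _ (m + d)); [by rewrite xmodD | lia].
by rewrite sumr_const card_ord [RHS]mulr_natl.
Qed.

Lemma sumC (c : CC) : \sum_(i < d) c = d%:R * c.
Proof. by rewrite sumr_const card_ord mulr_natl. Qed.

Lemma S5 m : \sum_(s < d) \sum_(r < d) tr (M (m + s) ((d - s) + r) (d - r) (g 1 * (g 2 * g 1)))
  = d%:R * (z * Ed m) + d%:R * (d%:R * ((u - 1) * ((d%:R)^-1 * (z * Ed m))
      + (u - 1) * ((d%:R)^-1 * (d%:R * (z * (z * x m)))))).
Proof.
set K := (u - 1) * _ + _.
rewrite (eq_bigr (fun s : 'I_d => \sum_(r < d) (z * x ((d - r) + (m + s))%N * x ((d - s) + r)%N + K))); last first.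
  move=> s _; apply: eq_bigr => r _; rewrite L5 -addrA /K.
  have := ltn_ord s; have := ltn_ord r => hr hs.
  congr (_ + (_ + _)).
    congr (_ * (_ * _)).
    rewrite (eq_bigr (fun j : 'I_d => z * (x (((d - s) + r) + (d - j))%N * x (((d - r) + (m + s)) + j)%N))); last first.
      by move=> j _; rewrite (addnAC (d - r)%N j (m + s)%N); ring.
    rewrite -mulr_sumr (shiftK d xs Hd); congr (_ * _); rewrite /Ed; apply: eq_bigr => j _.
    congr (_ * _); rewrite (xmodE d xs _ (m + j + d)%N); [by rewrite xmodD | lia].
  congr (_ * (_ * _)).
  rewrite (eq_bigr (fun _ => z * (z * x m))); first by rewrite sumC.
  move=> j _; have := ltn_ord j => hj.
  rewrite (xmodE d xs _ (m + d + d)%N); [by rewrite !xmodD | lia].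
rewrite (eq_bigr (fun s : 'I_d => \sum_(r < d) (z * x ((d - r) + (m + s))%N * x ((d - s) + r)%N) + d%:R * K)); last first.
  by move=> s _; rewrite big_split sumC.
rewrite big_split sumC; congr (_ + _).
rewrite exchange_big /=.
rewrite (eq_bigr (fun _ => z * Ed m)); first by rewrite sumC.
move=> r _.
rewrite (eq_bigr (fun j : 'I_d => z * (x (r + (d - j))%N * x (((d - r) + m) + j)%N))); last first.
  by move=> j _; rewrite (addnC (d - j)%N r) (addnA (d - r)%N m j); ring.
rewrite -mulr_sumr (shiftK d xs Hd); congr (_ * _); rewrite /Ed; apply: eq_bigr => j _.
have := ltn_ord r => hr.
congr (_ * _); rewrite (xmodE d xs _ (m + j)%N); [by [] | lia].
Qed.

Lemma mainS m : (m < d)%N ->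
  tr (yh_em d t m 1 * yh_e d t 2 * yh_g12 g) =
      (u + 1) * z ^+ 2 * xmod d xs m + (u + 2) * z * EE d xs m
      + tr (yh_em d t m 1 * yh_e d t 2).
Proof.
move=> hm.
rewrite /yh_g12 -(mulrA (g 1) (g 2) (g 1)) [in LHS]mulrDr.
rewrite ![in LHS]mulrDr mulr1 ![in LHS]linearD !aX S1 S2 S3 S4 S5.
have hE : EE d xs m = (d%:R)^-1 * Ed m.
  by rewrite /EE /Ed; congr (_ * _); apply: eq_bigr => j _; rewrite mulrC.
rewrite hE.
have hc : (d%:R : CC) != 0 by rewrite pnatr_eq0 -lt0n.
field.
exact: hc.
Qed.
End Alg.

Theorem lemma7 (d : nat) (u : CC) (A : algType CC) (g t : nat -> A)
  (z : CC) (xs : nat -> CC) (tr : {linear A -> CC^o}) :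
  (0 < d)%N -> u != 0 ->
  is_YH d u 3 g t ->
  is_markov_trace d 3 g t z xs tr ->
  forall m : nat, (m < d)%N ->
    tr (yh_em d t m 1 * yh_e d t 2 * yh_g12 g) =
      (u + 1) * z ^+ 2 * xmod d xs m + (u + 2) * z * EE d xs m
      + tr (yh_em d t m 1 * yh_e d t 2).
Proof.
move=> Hd hu [[_ [Hbr [HtC [_ [Hgt Hq]]]]] _] [HtrC Htr1 Htrg Htrt] m hm.
have [g1t1 g1t2 g1t3'] := Hgt 1%N erefl.
have g1t3 := g1t3' 3%N erefl erefl erefl.
have [g2t2 g2t3 g2t1'] := Hgt 2%N erefl.
have g2t1 := g2t1' 1%N erefl erefl erefl.
have braid := Hbr 1%N erefl erefl.
have quad := Hq 2%N erefl.
eapply mainS; eassumption.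
Qed.
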